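(* For all integers $n,f,k$ with $1\le f\le n-1$ and $1\le k\le n$, the task $(k+1)\text{-TAg}(n+1,f)$ is $C^*$-reducible to $k\text{-TAg}(n,f)$. Specifically, with $\Pi=\{1,\dots,n+1\}$ and $\Pi_i=\Pi\setminus\{i\}$, the following algorithm solves $(k+1)\text{-TAg}(\Pi,f)$ using the oracles $\mathcal O.k\text{-TAg}(\Pi_l,f)$, $l=1,\dots,n+1$: each process $i$, for $l=1,\dots,n+1$ with $l\ne i$ in this order, queries $\mathcal O.k\text{-TAg}(\Pi_l,f)$ with its initial value $v_i$, receives answer $w_l$ and sends $(l,w_l)$ to all; it then waits until it knows $w_l$ for all $l\in\{1,\dots,n+1\}$ and decides $\max_l w_l$.
   Context: Model: a finite set of processes runs an asynchronous algorithm communicating by reliable message passing with unbounded delays and speeds; processes fail only by crashing. Time is $\mathcal T=\mathbb N$; a failure pattern $F$ for $\Pi$ is a nondecreasing map $\mathcal T\to2^\Pi$, $Faulty(F)=\bigcup_tF(t)$. A binary agreement problem $P$ for $\Pi$ maps each $(F,\vec V)$, $\vec V\in\{0,1\}^\Pi$, to a nonempty $P(F,\vec V)\subseteq\{0,1\}$; a task is $T=(P,f)$. An algorithm solves $T$ if in every run with $|Faulty(F)|\le f$ and initial values $\vec V$: every correct process eventually decides, decisions are irrevocable, no two processes decide differently, and decisions lie in $P(F,\vec V)$. $k\text{-TAg}_\Pi(F,\vec V)=\{0\}$ if at least $k$ entries of $\vec V$ are $0$; $=\{1\}$ if $\vec V$ is all-ones and $|Faulty(F)|\le k-1$; $=\{0,1\}$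 otherwise; $k\text{-TAg}(\Pi,f)=(k\text{-TAg}_\Pi,f)$; $k\text{-TAg}(n,f)=k\text{-TAg}(\{1,\dots,n\},f)$. Oracles: for $T=(P,f)$ on process set $\Pi'$, $\mathcal O.T$ is a black box with consultants $\Pi'$; its history is a sequence of successive consultations, in each of which every consultant may submit at most one query in $\{0,1\}$ and the oracle returns a common response $d$ with $d\in P(F,\vec V)$ for every $\vec V$ extending the partial query vector (the oracle may use the whole failure pattern restricted to $\Pi'$, including future crashes), and every correct querier gets the response whenever at least $|\Pi'|-f$ consultants query; $\mathcal O.T$ is the most general such oracle. $C^*$-reduction: $T_1\le_{C^*}T_2$ if there is an algorithm solving $T_1$ whose processes may additionally consult any finite collection of oracles $\mathcal O.T_2^{(j)}$, each $T_2^{(j)}$ being a copy of $T_2$ whose processes are renamed into (a subset of) the processes of $T_1$. *)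

(* Defs.v *)
From mathcomp Require Import all_boot.
Set Implicit Arguments. Unset Strict Implicit. Unset Printing Implicit Defensive.

(* Processes Pi = {1,...,n+1} are represented by 'I_n.+1 (process i <-> ordinal i-1).
   Binary values: false = 0, true = 1.  Time = nat. *)

Section Model.
Variable n : nat.
Notation P := 'I_n.+1.

Definition correct (F : nat -> {set P}) (p : P) : Prop := forall t, p \notin F t.

(* Membership of b in k-TAg_Pi(F, W) for a sub-system Pi (only entries of W in Pi,
   and the failure pattern restricted to Pi, matter).
   |Faulty(F|Pi)| <= k-1 is written: forall t, #|F t :&: Pi| < k
   (equivalent, F being nondecreasing on a finite set). *)
Definition kTAg (k : nat) (Pi : {set P}) (F : nat -> {set P}) (W : P -> bool)
    (b : bool) : Prop :=
  (k <= #|[set q in Pi | ~~ W q]| -> b = false) /\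
  (#|[set q in Pi | ~~ W q]| < k ->
     (forall q, q \in Pi -> W q) ->
     (forall t, #|F t :&: Pi| < k) -> b = true).

(* Global configuration of the algorithm. Oracle l (l : P) is O.k-TAg(Pi_l, f),
   Pi_l = Pi \ {l}. *)
Record config := Config {
  c_next  : P -> nat;               (* next oracle index of the loop l = 0..n *)
  c_wait  : P -> bool;              (* waiting for the response of oracle c_next *)
  c_know  : P -> P -> option bool;  (* c_know p l = Some w : p knows w_l = w *)
  c_ans   : P -> P -> option bool;  (* c_ans p l : response of oracle l received by p *)
  c_dec   : P -> option bool;
  c_query : P -> P -> option bool;  (* c_query l q : query submitted by q to oracle l *)
  c_sent  : {set P * P * bool}      (* messages (dest, l, w_l) sent so far *)
}.

Definition init : config :=
  Config (fun _ => 0) (fun _ => false) (fun _ _ => None) (fun _ _ => None)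
         (fun _ => None) (fun _ _ => None) set0.

Definition upd (A : eqType) (B : Type) (g : A -> B) (a : A) (b : B) : A -> B :=
  fun x => if x == a then b else g x.

(* One atomic step of process p: receive the messages R (those sent to p so far),
   then either receive the pending oracle response (if oa) or issue the next query,
   then decide if the loop is over and all w_l are known.
   V : initial values; d l : the (common) response of oracle l in this run. *)
Definition step (V : P -> bool) (d : P -> bool) (c : config) (p : P)
    (R : {set P * P * bool}) (oa : bool) : config :=
  let RS := R :&: c_sent c in
  let know1 := fun l => match c_know c p l with
                        | Some w => Some w
                        | None => if (p, l, true) \in RS then Some true
                                  else if (p, l, false) \in RS then Some false
                                  else None end in
  let l : P := inord (c_next c p) in
  let '(nx, wt, kn, an, qu, se) :=
    if c_wait c p then
      if oa then
        ((c_next c p).+1, false, upd know1 l (Some (d l)),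
         upd (c_ans c p) l (Some (d l)), c_query c,
         c_sent c :|: [set (q, l, d l) | q : P])
      else (c_next c p, true, know1, c_ans c p, c_query c, c_sent c)
    else if c_next c p < n.+1 then
      if c_next c p == p :> nat then
        ((c_next c p).+1, false, know1, c_ans c p, c_query c, c_sent c)
      else
        (c_next c p, true, know1, c_ans c p,
         upd (c_query c) l (upd (c_query c l) p (Some (V p))), c_sent c)
    else (c_next c p, false, know1, c_ans c p, c_query c, c_sent c) in
  let dc :=
    if [&& ~~ wt, n.+1 <= nx, [forall l', kn l' != None] & c_dec c p == None]
    then Some [exists l', kn l' == Some true]   (* = max_l w_l *)
    else c_dec c p in
  Config (upd (c_next c) p nx) (upd (c_wait c) p wt) (upd (c_know c) p kn)
         (upd (c_ans c) p an) (upd (c_dec c) p dc) qu se.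

(* A run of the algorithm with the oracles O.k-TAg(Pi_l, f), l : P.
   sched t = Some p : p takes a step at time t (receiving the messages rcv t, and
   the pending oracle response if oans t). *)
Definition run (f k : nat) (V : P -> bool) (F : nat -> {set P}) (d : P -> bool)
    (sched : nat -> option P) (rcv : nat -> {set P * P * bool})
    (oans : nat -> bool) (conf : nat -> config) : Prop :=
  (forall t, F t \subset F t.+1) /\
  conf 0 = init /\
  (forall t, conf t.+1 = match sched t with
                            | Some p => step V d (conf t) p (rcv t) (oans t)
                            | None => conf t end) /\
  (forall t p, sched t = Some p -> p \notin F t) /\
  (forall p, correct F p -> forall t, exists2 t', t <= t' & sched t' = Some p) /\
  (forall p l w t, correct F p -> (p, l, w) \in c_sent (conf t) ->
     exists2 t', t <= t' & sched t' = Some p /\ (p, l, w) \in rcv t') /\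
      (* oracle liveness: if at least |Pi_l| - f = n - f consultants query
         oracle l, every correct querier gets the response *)
      (forall p t, correct F p -> c_wait (conf t) p ->
         (exists t0, n - f <= #|[set q | c_query (conf t0) (inord (c_next (conf t) p)) q
                                         != None]|) ->
         exists2 t', t <= t' & sched t' = Some p /\ oans t') /\
      (* oracle safety: the common response d l of oracle l, once given, lies in
         k-TAg_{Pi_l}(F|Pi_l, W) for every W extending the (partial) query vector *)
      (forall l, (exists t p, c_ans (conf t) p l != None) ->
         forall W : P -> bool,
           (forall q t b, c_query (conf t) l q = Some b -> W q = b) ->
           kTAg k [set~ l] F W (d l)).

Definition solves_in_run (k' : nat) (V : P -> bool) (F : nat -> {set P})
    (conf : nat -> config) : Prop :=
  [/\
      forall p, correct F p -> exists t, c_dec (conf t) p != None,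
      forall p t b, c_dec (conf t) p = Some b -> c_dec (conf t.+1) p = Some b,
      forall p q t t' b b', c_dec (conf t) p = Some b -> c_dec (conf t') q = Some b' ->
        b = b' &
      forall p t b, c_dec (conf t) p = Some b -> kTAg k' [set: P] F V b].

End Model.

(* Main.v *)
Require Import Defs.
From mathcomp Require Import all_boot.
Set Implicit Arguments. Unset Strict Implicit. Unset Printing Implicit Defensive.
Section S.
Variable n : nat.
Notation P := 'I_n.+1.
Variables (V d : P -> bool).

Definition know1 (c : config n) (p : P) (R : {set P * P * bool}) : P -> option bool :=
  fun l => match c_know c p l with
           | Some w => Some w
           | None => if (p, l, true) \in R :&: c_sent c then Some true
                     else if (p, l, false) \in R :&: c_sent c then Some false
                     else None end.

Definition mkstep (c : config n) (p : P) nx wt (kn an : P -> option bool) qu se :=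
  Config (upd (c_next c) p nx) (upd (c_wait c) p wt) (upd (c_know c) p kn)
         (upd (c_ans c) p an)
         (upd (c_dec c) p (if [&& ~~ wt, n.+1 <= nx, [forall l', kn l' != None] & c_dec c p == None]
    then Some [exists l', kn l' == Some true] else c_dec c p)) qu se.

Inductive phase_spec (c : config n) (p : P) R (oa : bool) :
  nat -> bool -> (P -> option bool) -> (P -> option bool) -> (P -> P -> option bool) ->
  {set P * P * bool} -> Prop :=
| PhA : c_wait c p -> oa ->
   phase_spec c p R oa (c_next c p).+1 false
     (upd (know1 c p R) (inord (c_next c p)) (Some (d (inord (c_next c p)))))
     (upd (c_ans c p) (inord (c_next c p)) (Some (d (inord (c_next c p)))))
     (c_query c) (c_sent c :|: [set (q, inord (c_next c p), d (inord (c_next c p))) | q : P])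
| PhB : c_wait c p -> ~~ oa ->
   phase_spec c p R oa (c_next c p) true (know1 c p R) (c_ans c p) (c_query c) (c_sent c)
| PhC : ~~ c_wait c p -> c_next c p < n.+1 -> c_next c p = p ->
   phase_spec c p R oa (c_next c p).+1 false (know1 c p R) (c_ans c p) (c_query c) (c_sent c)
| PhD : ~~ c_wait c p -> c_next c p < n.+1 -> c_next c p != p ->
   phase_spec c p R oa (c_next c p) true (know1 c p R) (c_ans c p)
     (upd (c_query c) (inord (c_next c p)) (upd (c_query c (inord (c_next c p))) p (Some (V p))))
     (c_sent c)
| PhE : ~~ c_wait c p -> n.+1 <= c_next c p ->
   phase_spec c p R oa (c_next c p) false (know1 c p R) (c_ans c p) (c_query c) (c_sent c).

Lemma stepP c p R oa : exists nx wt kn an qu se,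
  phase_spec c p R oa nx wt kn an qu se /\ step V d c p R oa = mkstep c p nx wt kn an qu se.
Proof.
rewrite /step.
case Hw: (c_wait c p).
  case Ho: oa.
    do 6 eexists; split; first by apply: PhA; rewrite ?Hw ?Ho.
    reflexivity.
  do 6 eexists; split; first by apply: PhB; rewrite ?Hw ?Ho.
  reflexivity.
case Hl: (c_next c p < n.+1).
  case He: (c_next c p == p :> nat).
    do 6 eexists; split; first by apply: PhC; rewrite ?Hw ?Hl //; apply/eqP.
    reflexivity.
  do 6 eexists; split; first by apply: PhD; rewrite ?Hw ?Hl ?He.
  reflexivity.
do 6 eexists; split; first by apply: PhE; rewrite ?Hw // leqNgt Hl.
reflexivity.
Qed.

Lemma upd_eq (A : eqType) B (g : A -> B) a b : upd g a b a = b.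
Proof. by rewrite /upd eqxx. Qed.
Lemma upd_neq (A : eqType) B (g : A -> B) a b x : x != a -> upd g a b x = g x.
Proof. by rewrite /upd => /negbTE ->. Qed.

Record Inv (c : config n) : Prop := {
 i_next : forall p, c_next c p <= n.+1;
 i_wait : forall p, c_wait c p -> c_next c p < n.+1 /\ c_next c p != p;
 i_wq : forall p, c_wait c p -> c_query c (inord (c_next c p)) p != None;
 i_past : forall p (l : P), l < c_next c p -> l != p ->
    [/\ c_query c l p != None, c_ans c p l != None & c_know c p l != None];
 i_query : forall l q b, c_query c l q = Some b -> b = V q;
 i_sent : forall x l w, (x, l, w) \in c_sent c -> w = d l /\ exists q, c_ans c q l != None;
 i_ans : forall p l w, c_ans c p l = Some w -> w = d l /\ forall x, (x, l, w) \in c_sent c;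
 i_know : forall p l w, c_know c p l = Some w -> w = d l /\ exists q, c_ans c q l != None;
 i_dec : forall p b, c_dec c p = Some b -> b = [exists l, d l] /\ forall l, exists q, c_ans c q l != None
}.

Record Mono (c c' : config n) : Prop := {
 m_next : forall p, c_next c p <= c_next c' p;
 m_query : forall l q b, c_query c l q = Some b -> c_query c' l q = Some b;
 m_ans : forall p l w, c_ans c p l = Some w -> c_ans c' p l = Some w;
 m_know : forall p l w, c_know c p l = Some w -> c_know c' p l = Some w;
 m_sent : c_sent c \subset c_sent c';
 m_dec : forall p b, c_dec c p = Some b -> c_dec c' p = Some b
}.

Record PF (c : config n) p nx (wt : bool) (kn an : P -> option bool) (qu : P -> P -> option bool) (se : {set P * P * bool}) : Prop := {
 pf_next : c_next c p <= nx <= n.+1;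
 pf_wait : wt -> [/\ nx < n.+1, nx != p & qu (inord nx) p != None];
 pf_past : forall l : P, l < nx -> l != p -> [/\ qu l p != None, an l != None & kn l != None];
 pf_query : forall l q b, c_query c l q = Some b -> qu l q = Some b;
 pf_queryV : forall l q b, qu l q = Some b -> b = V q;
 pf_sent : c_sent c \subset se;
 pf_sentV : forall x l w, (x,l,w) \in se -> w = d l /\ exists q, upd (c_ans c) p an q l != None;
 pf_ans : forall l w, c_ans c p l = Some w -> an l = Some w;
 pf_ansV : forall l w, an l = Some w -> w = d l /\ forall x, (x,l,w) \in se;
 pf_know : forall l w, c_know c p l = Some w -> kn l = Some w;
 pf_knowV : forall l w, kn l = Some w -> w = d l /\ exists q, upd (c_ans c) p an q l != None
}.

Lemma lift_ans (c : config n) p an l : (forall l w, c_ans c p l = Some w -> an l = Some w) ->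
  (exists q, c_ans c q l != None) -> exists q, upd (c_ans c) p an q l != None.
Proof.
move=> H [q Hq]; case: (eqVneq q p) => [Eq|hqp]; last by exists q; rewrite upd_neq.
exists p; rewrite upd_eq; move: Hq; rewrite Eq; case E: (c_ans c p l) => [w|] //.
by rewrite (H _ _ E).
Qed.

Lemma know1_ext (c : config n) p R l w : c_know c p l = Some w -> know1 c p R l = Some w.
Proof. by rewrite /know1 => ->. Qed.

Lemma know1_nN (c : config n) p R l : c_know c p l != None -> know1 c p R l != None.
Proof. by case E: (c_know c p l) => [w|] // _; rewrite (know1_ext _ E). Qed.

Lemma know1_V (c : config n) p R l w : Inv c -> know1 c p R l = Some w ->
  w = d l /\ exists q, c_ans c q l != None.
Proof.
move=> I; rewrite /know1; case E: (c_know c p l) => [w'|].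
  by move=> [<-]; apply: (i_know I E).
case: ifP => [/setIP [_ H] [<-]|_]; first exact: (i_sent I H).
case: ifP => [/setIP [_ H] [<-]|_] //; exact: (i_sent I H).
Qed.

Lemma PF_triv (c : config n) p (R : {set P * P * bool}) nx (wt : bool) : Inv c -> c_next c p <= nx <= n.+1 ->
  (wt -> [/\ nx < n.+1, nx != p & c_query c (inord nx) p != None]) ->
  (forall l : P, l < nx -> l != p -> l < c_next c p) ->
  PF c p nx wt (know1 c p R) (c_ans c p) (c_query c) (c_sent c).
Proof.
move=> I Hn Hw Hl; split => //.
- move=> l /Hl H /[dup] /H {}H Hp.
  by case: (i_past I H Hp) => [? ? /know1_nN ?]; split.
- exact: (i_query I).
- move=> x l w /(i_sent I) [-> H]; split => //; apply: lift_ans H => //.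
- exact: (i_ans I).
- by move=> l w /know1_ext.
- move=> l w /(know1_V I) [-> H]; split => //; apply: lift_ans H => //.
Qed.

Lemma upd_nN (A B : eqType) (g : A -> option B) a b x : g x != None -> upd g a (Some b) x != None.
Proof. by rewrite /upd; case: ifP. Qed.

Lemma phaseF (c : config n) p R oa nx wt kn an qu se : Inv c ->
  phase_spec c p R oa nx wt kn an qu se -> PF c p nx wt kn an qu se.
Proof.
move=> I; case.
-
  move=> Hw _.
  have [Hj Hjp] := i_wait I Hw.
  set j := c_next c p in Hj Hjp *; set l0 : P := inord j.
  have Hl0 : (l0 : nat) = j by rewrite inordK.
  have Hans : forall l w, c_ans c p l = Some w -> upd (c_ans c p) l0 (Some (d l0)) l = Some w.
    move=> l w E; rewrite /upd; case: eqP => [El|//].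
    by have [Hw' _] := i_ans I E; rewrite Hw' El.
  split => //.
  + by rewrite leqnSn.
  + move=> l; rewrite ltnS leq_eqVlt => /orP [/eqP Ej | Hlt] Hlp.
      have -> : l = l0 by apply: val_inj; rewrite /= Hl0.
      by rewrite !upd_eq; split => //; apply: (i_wq I Hw).
    case: (i_past I Hlt Hlp) => [H1 H2 /(know1_nN R) H3]; split => //; exact: upd_nN.
  + exact: (i_query I).
  + exact: subsetUl.
  + move=> x l w /setUP [H|/imsetP [q _ [_ -> ->]]].
      have [-> H'] := i_sent I H; split => //; exact: lift_ans H'.
    by split => //; exists p; rewrite !upd_eq.
  + move=> l w; rewrite /upd; case: eqP => [-> [<-]|_ E].
      by split => // x; apply/setUP; right; apply/imsetP; exists x.
    have [-> H'] := i_ans I E; split => // x; apply/setUP; left; exact: H'.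
  + move=> l w E; rewrite /upd; case: eqP => [El|_]; last exact: know1_ext.
    by have [-> _] := i_know I E; rewrite El.
  + move=> l w; case: (eqVneq l l0) => [->|Hne]; [rewrite upd_eq => -[<-] | rewrite upd_neq // => E].
      by split => //; exists p; rewrite !upd_eq.
    have [-> H'] := know1_V I E; split => //; exact: lift_ans H'.
-
  move=> Hw _; apply: PF_triv => //.
  + by rewrite leqnn (i_next I).
  + by move=> _; have [? ?] := i_wait I Hw; split => //; apply: (i_wq I Hw).
-
  move=> _ Hl He; apply: PF_triv => //.
  + by rewrite leqnSn Hl.
  + move=> l; rewrite ltnS leq_eqVlt He => /orP [/eqP Ej|//] Hlp.
    by exfalso; move/eqP: Hlp; apply; apply: val_inj.
-
  move=> Hw Hl He.
  set j := c_next c p in Hl He *; set l0 : P := inord j.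
  have Hl0 : (l0 : nat) = j by rewrite inordK.
  split => //.
  + by rewrite leqnn (i_next I).
  + by move=> _; split => //; rewrite -/l0 !upd_eq.
  + move=> l Hlt Hlp; case: (i_past I Hlt Hlp) => [H1 H2 /(know1_nN R) H3]; split => //.
    by case: (eqVneq l l0) => [->|Hne]; [rewrite !upd_eq | rewrite upd_neq].
  + move=> l q b E; case: (eqVneq l l0) => [El|Hne]; last by rewrite upd_neq.
    rewrite El upd_eq; case: (eqVneq q p) => [Eq|Hq]; last by rewrite upd_neq // -El.
    by rewrite Eq upd_eq (i_query I E) Eq.
  + move=> l q b; case: (eqVneq l l0) => [->|Hne]; last by rewrite upd_neq //; apply: (i_query I).
    rewrite upd_eq; case: (eqVneq q p) => [->|Hq]; first by rewrite upd_eq => -[<-].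
    rewrite upd_neq //; exact: (i_query I).
  + move=> x l w /(i_sent I) [-> H]; split => //; apply: lift_ans H => //.
  + exact: (i_ans I).
  + by move=> l w /know1_ext.
  + move=> l w /(know1_V I) [-> H]; split => //; apply: lift_ans H => //.
-
  move=> _ Hl; apply: PF_triv => //.
  by rewrite leqnn (i_next I).
Qed.

Lemma mk_inv (c : config n) p nx wt kn an qu se : Inv c -> PF c p nx wt kn an qu se ->
  Inv (mkstep c p nx wt kn an qu se) /\ Mono c (mkstep c p nx wt kn an qu se).
Proof.
move=> I F.
have qN : forall l q, c_query c l q != None -> qu l q != None.
  by move=> l q; case E: (c_query c l q) => [b|] // _; rewrite (pf_query F E).
have aL : forall l, (exists q, c_ans c q l != None) -> exists q, upd (c_ans c) p an q l != None.
  by move=> l; apply: lift_ans; apply: (pf_ans F).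
split; split; rewrite /mkstep /=.
- by move=> q; case: (eqVneq q p) => [->|Hq]; [rewrite upd_eq; case/andP: (pf_next F) | rewrite upd_neq // (i_next I)].
- move=> q; case: (eqVneq q p) => [->|Hq]; first by rewrite !upd_eq => /(pf_wait F) [].
  by rewrite !upd_neq //; apply: (i_wait I).
- move=> q; case: (eqVneq q p) => [->|Hq]; first by rewrite !upd_eq => /(pf_wait F) [].
  by rewrite !upd_neq // => /(i_wq I); apply: qN.
- move=> q l; case: (eqVneq q p) => [->|Hq]; first by rewrite !upd_eq; apply: (pf_past F).
  rewrite !upd_neq // => Hl Hlq; case: (i_past I Hl Hlq) => /qN ? ? ?; by split.
- exact: (pf_queryV F).
- exact: (pf_sentV F).
- move=> q l w; case: (eqVneq q p) => [->|Hq]; first by rewrite upd_eq; apply: (pf_ansV F).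
  rewrite upd_neq // => /(i_ans I) [-> H]; split => // x; exact: (subsetP (pf_sent F)).
- move=> q l w; case: (eqVneq q p) => [->|Hq]; first by rewrite upd_eq; apply: (pf_knowV F).
  rewrite upd_neq // => /(i_know I) [-> H]; split => //; exact: aL.
- move=> q b; case: (eqVneq q p) => [->|Hq]; last first.
    rewrite upd_neq // => /(i_dec I) [-> H]; split => // l; exact: aL.
  rewrite upd_eq; case: ifP => [/and4P [_ _ /forallP Hall _] [<-]| _ /(i_dec I) [-> H]]; last first.
    by split => // l; exact: aL.
  have Hk : forall l, kn l = Some (d l).
    move=> l; move: (Hall l); case E: (kn l) => [w|] // _; by rewrite -(pf_knowV F E).1.
  split.
    apply/existsP/existsP => [[l Hl]|[l Hl]]; exists l; last by rewrite Hk Hl.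
    by move: Hl; rewrite Hk => /eqP [->].
  by move=> l; move: (Hk l) => /(pf_knowV F) [].
- by move=> q; case: (eqVneq q p) => [->|Hq]; [rewrite upd_eq; case/andP: (pf_next F) | rewrite upd_neq].
- exact: (pf_query F).
- by move=> q l w; case: (eqVneq q p) => [->|Hq]; [rewrite upd_eq; apply: (pf_ans F) | rewrite upd_neq].
- by move=> q l w; case: (eqVneq q p) => [->|Hq]; [rewrite upd_eq; apply: (pf_know F) | rewrite upd_neq].
- exact: (pf_sent F).
- move=> q b E; case: (eqVneq q p) => [Eq|Hq]; last by rewrite upd_neq.
  by rewrite Eq upd_eq -Eq E !andbF.
Qed.

Lemma step_inv (c : config n) p R oa : Inv c ->
  Inv (step V d c p R oa) /\ Mono c (step V d c p R oa).
Proof.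
move=> I; have [nx [wt [kn [an [qu [se [Hs ->]]]]]]] := stepP c p R oa.
exact: mk_inv I (phaseF I Hs).
Qed.

Lemma inv_init : Inv (init n).
Proof. by split => //= x l w; rewrite in_set0. Qed.

Lemma step_other (c : config n) p q R oa : q != p ->
  c_next (step V d c q R oa) p = c_next c p /\ c_wait (step V d c q R oa) p = c_wait c p.
Proof.
move=> Hq; have [nx [wt [kn [an [qu [se [Hs ->]]]]]]] := stepP c q R oa.
by rewrite /mkstep /= !upd_neq // eq_sym.
Qed.

Lemma step_wait (c : config n) p R oa : c_wait c p ->
  if oa then c_next (step V d c p R oa) p = (c_next c p).+1
  else c_next (step V d c p R oa) p = c_next c p /\ c_wait (step V d c p R oa) p.
Proof.
move=> Hw0; have [nx [wt [kn [an [qu [se [Hs ->]]]]]]] := stepP c p R oa.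
case: Hs => [Hw Ho|Hw Ho|Hw|Hw|Hw]; rewrite /mkstep /= ?upd_eq.
- by rewrite Ho.
- by rewrite (negbTE Ho).
all: by rewrite Hw0 in Hw.
Qed.

Lemma step_nowait (c : config n) p R oa : ~~ c_wait c p -> c_next c p < n.+1 ->
  if c_next c p == p :> nat then c_next (step V d c p R oa) p = (c_next c p).+1
  else c_next (step V d c p R oa) p = c_next c p /\ c_wait (step V d c p R oa) p.
Proof.
move=> Hw0 Hl0; have [nx [wt [kn [an [qu [se [Hs ->]]]]]]] := stepP c p R oa.
case: Hs => [Hw Ho|Hw Ho|Hw Hl He|Hw Hl He|Hw Hl]; rewrite /mkstep /= ?upd_eq.
- by rewrite Hw in Hw0.
- by rewrite Hw in Hw0.
- by rewrite He eqxx.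
- by rewrite (negbTE He).
- by rewrite ltnNge Hl in Hl0.
Qed.

Lemma step_decide (c : config n) p R oa w : Inv c -> c_next c p = n.+1 ->
  (p, p, w) \in R :&: c_sent c -> c_dec (step V d c p R oa) p != None.
Proof.
move=> I Hn Hm.
have Hw : ~~ c_wait c p by apply/negP => /(i_wait I) []; rewrite Hn ltnn.
have [nx [wt [kn [an [qu [se [Hs ->]]]]]]] := stepP c p R oa.
case: Hs => [Hw' _|Hw' _|_ Hl _|_ Hl _|_ _].
- by rewrite Hw' in Hw.
- by rewrite Hw' in Hw.
- by rewrite Hn ltnn in Hl.
- by rewrite Hn ltnn in Hl.
rewrite /mkstep /= upd_eq; case E: (c_dec c p) => [b|]; first by case: ifP.
rewrite Hn leqnn /= andbT; case: ifP => //; move/negbT/negP => H; exfalso; apply: H; apply/forallP => l.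
case: (eqVneq l p) => [->|Hlp].
  rewrite /know1; case: (c_know c p p) => // ; case: ifP => // H1; case: ifP => // H2.
  by case: w Hm; [rewrite H1 | rewrite H2].
apply: know1_nN; have Hl : (l : nat) < c_next c p by rewrite Hn ltn_ord.
by case: (i_past I Hl Hlp).
Qed.
End S.

Lemma common_time (T : finType) (Pr : nat -> T -> Prop) :
  (forall t t' q, t <= t' -> Pr t q -> Pr t' q) -> (forall q, exists t, Pr t q) ->
  exists t, forall q, Pr t q.
Proof.
move=> Hm H.
suff [t Ht] : exists t, forall q, q \in enum T -> Pr t q.
  by exists t => q; apply: Ht; rewrite mem_enum.
elim: (enum T) => [|a s [t IH]]; first by exists 0.
have [ta Ha] := H a; exists (maxn t ta) => q; rewrite inE => /orP [/eqP ->|Hq].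
  by apply: Hm Ha; rewrite leq_maxr.
by apply: Hm (IH q Hq); rewrite leq_maxl.
Qed.

Lemma mono_refl n (c : config n) : Mono c c.
Proof. by split. Qed.

Lemma mono_trans n (c1 c2 c3 : config n) : Mono c1 c2 -> Mono c2 c3 -> Mono c1 c3.
Proof.
move=> [a1 b1 c1' d1 e1 f1] [a2 b2 c2' d2 e2 f2]; split.
- by move=> p; apply: leq_trans (a1 p) (a2 p).
- by move=> *; apply: b2; apply: b1.
- by move=> *; apply: c2'; apply: c1'.
- by move=> *; apply: d2; apply: d1.
- exact: subset_trans e1 e2.
- by move=> *; apply: f2; apply: f1.
Qed.

From Stdlib Require Import Classical.
From mathcomp Require Import zify.

Section Run.
Variables (n f k : nat) (V : 'I_n.+1 -> bool) (F : nat -> {set 'I_n.+1}) (d : 'I_n.+1 -> bool)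
  (sched : nat -> option 'I_n.+1) (rcv : nat -> {set 'I_n.+1 * 'I_n.+1 * bool})
  (oans : nat -> bool) (conf : nat -> config n).
Notation P := 'I_n.+1.
Hypothesis Hrun : run f k V F d sched rcv oans conf.
Hypothesis HF : forall t, #|F t| <= f.

Lemma Hst t : conf t.+1 = match sched t with Some p => step V d (conf t) p (rcv t) (oans t)
                                           | None => conf t end.
Proof. by case: Hrun => _ [_ [H _]]. Qed.

Lemma invt t : Inv V d (conf t).
Proof.
elim: t => [|t I]; first by case: Hrun => _ [-> _]; apply: inv_init.
by rewrite Hst; case: (sched t) => [p|] //; apply: (step_inv _ _ _ I).1.
Qed.

Lemma inv_t t : Inv V d (conf t) /\ Mono (conf t) (conf t.+1).
Proof.
split; first exact: invt.
rewrite Hst; case: (sched t) => [p|]; last exact: mono_refl.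
exact: (step_inv _ _ _ (invt t)).2.
Qed.

Lemma mono_le t t' : t <= t' -> Mono (conf t) (conf t').
Proof.
elim: t' => [|t' IH]; first by rewrite leqn0 => /eqP ->; apply: mono_refl.
rewrite leq_eqVlt => /orP [/eqP ->|]; first exact: mono_refl.
rewrite ltnS => /IH H; apply: mono_trans H (inv_t t').2.
Qed.

Lemma F_mono t t' : t <= t' -> F t \subset F t'.
Proof.
case: Hrun => HFm _.
elim: t' => [|t' IH]; first by rewrite leqn0 => /eqP ->.
rewrite leq_eqVlt => /orP [/eqP ->|]; first exact: subxx.
rewrite ltnS => /IH H; apply: subset_trans H (HFm t').
Qed.


Lemma Hfair p : correct F p -> forall t, exists2 t', t <= t' & sched t' = Some p.
Proof. by case: Hrun => _ [_ [_ [_ [H _]]]]; apply: H. Qed.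

Lemma Hrel p l w t : correct F p -> (p, l, w) \in c_sent (conf t) ->
     exists2 t', t <= t' & sched t' = Some p /\ (p, l, w) \in rcv t'.
Proof. by case: Hrun => _ [_ [_ [_ [_ [H _]]]]]; apply: H. Qed.

Lemma Hlive p t : correct F p -> c_wait (conf t) p ->
   (exists t0, n - f <= #|[set q | c_query (conf t0) (inord (c_next (conf t) p)) q != None]|) ->
   exists2 t', t <= t' & sched t' = Some p /\ oans t'.
Proof. by case: Hrun => _ [_ [_ [_ [_ [_ [H _]]]]]]; apply: H. Qed.

Lemma Hsafe l : (exists t p, c_ans (conf t) p l != None) ->
   forall W : P -> bool, (forall q t b, c_query (conf t) l q = Some b -> W q = b) ->
   kTAg k [set~ l] F W (d l).
Proof. by case: Hrun => _ [_ [_ [_ [_ [_ [_ H]]]]]]; apply: H. Qed.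

Lemma wait_persist p j t : c_next (conf t) p = j -> c_wait (conf t) p ->
  forall t', t <= t' -> (c_next (conf t') p = j /\ c_wait (conf t') p) \/ j < c_next (conf t') p.
Proof.
move=> Hn Hw; elim => [|t' IH].
  by rewrite leqn0 => /eqP <-; left.
rewrite leq_eqVlt => /orP [/eqP <-|]; first by left.
rewrite ltnS => /IH [[Hn' Hw']|Hlt]; last by right; apply: leq_trans Hlt (m_next (inv_t t').2 p).
rewrite Hst; case E: (sched t') => [q|]; last by left.
case: (eqVneq q p) => [->|Hqp].
  have := step_wait V d (rcv t') (oans t') Hw'; case: (oans t') => H.
    by right; rewrite H Hn'.
  by left; case: H => -> ->.
by have [-> ->] := step_other V d (conf t') (rcv t') (oans t') Hqp; left.
Qed.

Lemma reach_wait p j t : correct F p -> j < n.+1 -> j != p -> j <= c_next (conf t) p ->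
  exists t1, (c_next (conf t1) p = j /\ c_wait (conf t1) p) \/ j < c_next (conf t1) p.
Proof.
move=> Hc Hj Hjp; rewrite leq_eqVlt => /orP [/eqP Ej|Hlt]; last by exists t; right.
have [t' Htt' Hs] := Hfair Hc t.
have := m_next (mono_le Htt') p; rewrite -Ej leq_eqVlt => /orP [/eqP Ej'|Hlt]; last by exists t'; right.
case Hw: (c_wait (conf t') p); first by exists t'; left.
exists t'.+1; left; rewrite Hst Hs.
have Hl' : c_next (conf t') p < n.+1 by rewrite -Ej'.
by have := step_nowait V d (rcv t') (oans t') (negbT Hw) Hl'; rewrite -Ej' (negbTE Hjp).
Qed.

Lemma advance p j t : correct F p -> j < n.+1 ->
  (exists t0, n - f <= #|[set q | c_query (conf t0) (inord j) q != None]|) ->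
  j <= c_next (conf t) p -> exists t', j < c_next (conf t') p.
Proof.
move=> Hc Hj G Hle; case: (eqVneq j (p : nat)) => [Ejp|Hjp].
  have [t' Htt' Hs] := Hfair Hc t.
  have := leq_trans Hle (m_next (mono_le Htt') p).
  rewrite leq_eqVlt => /orP [/eqP Ej'|Hlt]; last by exists t'.
  have Hw : ~~ c_wait (conf t') p.
    by apply/negP => /(i_wait (invt t')) [_]; rewrite -Ej' Ejp eqxx.
  exists t'.+1; rewrite Hst Hs.
  have Hl' : c_next (conf t') p < n.+1 by rewrite -Ej'.
  by have := step_nowait V d (rcv t') (oans t') Hw Hl'; rewrite -Ej' Ejp eqxx => ->.
have [t1 [[Hn1 Hw1]|Hlt]] := reach_wait Hc Hj Hjp Hle; last by exists t1.
have G' : exists t0, n - f <= #|[set q | c_query (conf t0) (inord (c_next (conf t1) p)) q != None]|.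
  by rewrite Hn1.
have [t2 Ht12 [Hs2 Ho2]] := Hlive Hc Hw1 G'.
have [[Hn2 Hw2]|Hlt] := wait_persist Hn1 Hw1 Ht12; last by exists t2.
exists t2.+1; rewrite Hst Hs2.
have := step_wait V d (rcv t2) (oans t2) Hw2; rewrite Ho2 => ->.
by rewrite Hn2.
Qed.

Lemma Gj j : j < n.+1 -> (forall p, correct F p -> exists t, j <= c_next (conf t) p) ->
  exists t0, n - f <= #|[set q | c_query (conf t0) (inord j) q != None]|.
Proof.
move=> Hj IH.
pose l0 : P := inord j.
have Hl0 : (l0 : nat) = j by rewrite inordK.
have [T HT] : exists T, forall q, q = l0 \/ q \in F T \/ c_query (conf T) l0 q != None.
  apply: common_time.
    move=> t t' q Htt' [->|[H|H]]; [by left | by right; left; exact: (subsetP (F_mono Htt')) | right; right].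
    by move: H; case E: (c_query (conf t) l0 q) => [b|] // _; rewrite (m_query (mono_le Htt') E).
  move=> q; case: (eqVneq q l0) => [->|Hq]; first by exists 0; left.
  have Hqj : j != q.
    by apply: contra Hq => /eqP Ejq; apply/eqP; apply: val_inj => /=; rewrite Hl0 Ejq.
  case: (classic (correct F q)) => Hc.
    have [t Ht] := IH q Hc.
    have [t1 [[Hn1 Hw1]|Hlt]] := reach_wait Hc Hj Hqj Ht; exists t1; right; right.
      by have := i_wq (invt t1) Hw1; rewrite Hn1.
    have Hl0' : (l0 : nat) < c_next (conf t1) q by rewrite Hl0.
    by case: (i_past (invt t1) Hl0' (_ : l0 != q)); rewrite // eq_sym.
  move: Hc; rewrite /correct => /not_all_ex_not [t /negP /negbNE Ht]; exists t; right; left.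
  exact: Ht.
exists T.
have Hsub : (~: F T) :\ l0 \subset [set q | c_query (conf T) l0 q != None].
  apply/subsetP => q; rewrite !inE => /andP [Hq Hn].
  case: (HT q) => [E|[E|E]] //; first by rewrite E eqxx in Hq.
  by rewrite E in Hn.
have := subset_leq_card Hsub; have := cardsD1 l0 (~: F T); have := cardsC (F T).
rewrite card_ord; have := HF T; case: (l0 \in ~: F T) => /=; rewrite -/l0 => h1 h2 h3 h4; apply: leq_trans h4; move: h1 h2 h3; set A := #|~: F T|; set B := #|F T|; set C := #|_ :\ l0|. all: lia.
Qed.

Lemma Lall j : j <= n.+1 -> forall p, correct F p -> exists t, j <= c_next (conf t) p.
Proof.
elim: j => [|j IH] Hj p Hc; first by exists 0.
have Hj' : j < n.+1 := Hj.
have IH' := IH (ltnW Hj).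
have [t Ht] := IH' p Hc.
exact: advance Hc Hj' (Gj Hj' IH') Ht.
Qed.

Lemma other_correct p : 1 <= f <= n - 1 -> exists q, q != p /\ correct F q.
Proof.
move=> Hf; apply: NNPP => Hno.
have [T HT] : exists T, forall q, q = p \/ q \in F T.
  apply: common_time.
    by move=> t t' q Htt' [->|H]; [left | right; exact: (subsetP (F_mono Htt'))].
  move=> q; case: (eqVneq q p) => [->|Hq]; first by exists 0; left.
  have : ~ correct F q by move=> Hc; apply: Hno; exists q.
  by rewrite /correct => /not_all_ex_not [t /negP /negbNE Ht]; exists t; right.
have Hsub : [set~ p] \subset F T.
  apply/subsetP => q; rewrite !inE => Hq; case: (HT q) => // E.
  by rewrite E eqxx in Hq.
have := subset_leq_card Hsub; rewrite cardsC1 card_ord /=.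
have := HF T; move: Hf; set B := #|F T|; lia.
Qed.

Lemma term p : 1 <= f <= n - 1 -> correct F p -> exists t, c_dec (conf t) p != None.
Proof.
move=> Hf Hc.
have [t1 H1] := Lall (leqnn n.+1) Hc.
have [q [Hqp Hcq]] := other_correct p Hf.
have [t2 H2] := Lall (leqnn n.+1) Hcq.
have Hpq : (p : nat) < c_next (conf t2) q by apply: leq_trans (ltn_ord p) H2.
have Hpq' : p != q by rewrite eq_sym.
have [_ Ha _] := i_past (invt t2) Hpq Hpq'.
move: Ha; case Ew: (c_ans (conf t2) q p) => [w|] // _.
have Hm := (i_ans (invt t2) Ew).2 p.
have Hm' : (p, p, w) \in c_sent (conf (maxn t1 t2)).
  exact: (subsetP (m_sent (mono_le (leq_maxr t1 t2)))).
have [t' Ht' [Hs Hr]] := Hrel Hc Hm'.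
exists t'.+1.
have Ht1' : t1 <= t' by apply: leq_trans (leq_maxl _ _) Ht'.
have Hn' : c_next (conf t') p = n.+1.
  by apply/eqP; rewrite eqn_leq (i_next (invt t')) (leq_trans H1 (m_next (mono_le Ht1') p)).
have Hms : (p, p, w) \in c_sent (conf t') by apply: (subsetP (m_sent (mono_le Ht'))).
have Hin : (p, p, w) \in rcv t' :&: c_sent (conf t') by apply/setIP.
rewrite Hst Hs; have := step_decide (oans t') (invt t') Hn' Hin. by []. Qed.

Lemma valid p t b : 1 <= k -> c_dec (conf t) p = Some b -> kTAg k.+1 [set: P] F V b.
Proof.
move=> Hk /(i_dec (invt t)) [-> Hans].
have Hs : forall l, kTAg k [set~ l] F V (d l).
  move=> l; apply: Hsafe.
    by have [q Hq] := Hans l; exists t, q.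
  by move=> q t' b' /(i_query (invt t')) ->.
split.
  move=> Hz; apply/negbTE/existsP => -[l Hl].
  have [H _] := Hs l.
  suff Hkl : k <= #|[set q in [set~ l] | ~~ V q]| by rewrite (H Hkl) in Hl.
  set Z := [set q in [set: P] | ~~ V q] in Hz.
  have Hsub : Z :\ l \subset [set q in [set~ l] | ~~ V q].
    by apply/subsetP => q; rewrite !inE => /andP [-> ->].
  have := subset_leq_card Hsub; have := cardsD1 l Z.
  case: (l \in Z) => /=; move: Hz; set A := #|Z|; set C := #|Z :\ l|; move=> h1 h2 h3; apply: leq_trans h3; lia.
move=> _ Hall HFt.
have Hemp : forall l, [set q in [set~ l] | ~~ V q] = set0.
  by move=> l; apply/setP => q; rewrite !inE (Hall q (in_setT q)) andbF.
case: (classic (exists t0 l, l \in F t0)) => [[t0 [l Hl]]|Hno].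
  apply/existsP; exists l; have [_ H] := Hs l; apply: H.
  - by rewrite Hemp cards0.
  - by move=> q _; exact: Hall q (in_setT q).
  move=> t'.
  have Hsub : F t' :&: [set~ l] \subset F (maxn t' t0) :\ l.
    apply/subsetP=> q; rewrite !inE => /andP [Hq ->] /=.
    exact: (subsetP (F_mono (leq_maxl t' t0))).
  have Hl' : l \in F (maxn t' t0) := subsetP (F_mono (leq_maxr _ _)) _ Hl.
  have := cardsD1 l (F (maxn t' t0)); rewrite Hl'.
  have := HFt (maxn t' t0); rewrite setIT.
  have := subset_leq_card Hsub.
  set A := #|F t' :&: _|; set B := #|F (maxn t' t0)|; set C := #|_ :\ l|; lia.
apply/existsP; exists ord0; have [_ H] := Hs ord0; apply: H.
- by rewrite Hemp cards0.
- by move=> q _; exact: Hall q (in_setT q).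
move=> t'.
have -> : F t' :&: [set~ ord0] = set0.
  apply/setP => q; rewrite !inE; case E: (q \in F t') => //.
  by exfalso; apply: Hno; exists t', q.
by rewrite cards0.
Qed.
End Run.

Theorem mainTheorem7 (n f k : nat) :
  1 <= f <= n - 1 -> 1 <= k <= n ->
  forall (V : 'I_n.+1 -> bool) (F : nat -> {set 'I_n.+1}) (d : 'I_n.+1 -> bool)
         (sched : nat -> option 'I_n.+1) (rcv : nat -> {set 'I_n.+1 * 'I_n.+1 * bool})
         (oans : nat -> bool) (conf : nat -> config n),
  (forall t, #|F t| <= f) ->
  run f k V F d sched rcv oans conf ->
  solves_in_run k.+1 V F conf.
Proof.
move=> Hf /andP [Hk _] V F d sched rcv oans conf HF Hrun; split.
- by move=> p Hc; exact: (term Hrun HF Hf Hc).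
- by move=> p t b E; exact: (m_dec (inv_t Hrun t).2 E).
- move=> p q t t' b b' E1 E2.
  by rewrite (i_dec (invt Hrun t) E1).1 (i_dec (invt Hrun t') E2).1.
- by move=> p t b E; exact: (valid Hrun Hk E).
Qed.
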